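(* Let $U=(u_1,\dots,u_n)$ be a sequence of (precise) points in $\mathbb{R}^d$ and $W=(w_1,\dots,w_m)$ a sequence of imprecise points, each modeled as a closed $d$-dimensional ball, and let $\delta>0$. Then whether $F^{\max}_1(U,W)\le\delta$ can be determined in $O(d(n+m))$ time and space.
   Context: For point sequences $A=(a_1,\dots,a_n)$, $B=(b_1,\dots,b_m)$ with Euclidean distance $d(\cdot,\cdot)$, the discrete Fréchet distance $F(A,B)$ is the minimum over all sequences of index pairs from $(1,1)$ to $(n,m)$, each step increasing the first index by one, the second by one, or both by one, of the maximum of $d(a_i,b_j)$ over pairs $(i,j)$ in the sequence. The one-sided discrete Fréchet distance with shortcuts on side $B$ is $F_c(A,B)=\min\{F(A,B')\}$ over all non-empty subsequences $B'$ of $B$ (order preserved). For region sequences $U=(u_1,\dots,u_n)$, $W=(w_1,\dots,w_m)$, $F^{\max}_1(U,W)=\max\{F_c(A,B)\}$ over all realizations $A=(a_1,\dots,a_n)$, $B=(b_1,\dots,b_m)$ with $a_i\in u_i$, $b_j\in w_j$; a precise point is a region consisting of one point. *)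

(* Defs.v *)
From Stdlib Require Import Reals Lra Lia List ZArith.
Import ListNotations.
Open Scope R_scope.

Definition point := list R.

Fixpoint sqsum (a b : point) : R :=
  match a, b with
  | x :: a', y :: b' => (x - y) * (x - y) + sqsum a' b'
  | _, _ => 0
  end.

(* Euclidean distance (for points of the same dimension). *)
Definition dist (a b : point) : R := sqrt (sqsum a b).

(* A coupling (0-based index pairs) between sequences of lengths n and m:
   starts at (0,0), ends at (n-1,m-1), each step increases the first index,
   the second index, or both, by one. *)
Definition valid_step (p q : nat * nat) : Prop :=
  (fst q = S (fst p) /\ snd q = snd p) \/
  (fst q = fst p /\ snd q = S (snd p)) \/
  (fst q = S (fst p) /\ snd q = S (snd p)).

Fixpoint steps_ok (p : nat * nat) (l : list (nat * nat)) : Prop :=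
  match l with
  | [] => True
  | q :: l' => valid_step p q /\ steps_ok q l'
  end.

Definition is_coupling (n m : nat) (c : list (nat * nat)) : Prop :=
  match c with
  | [] => False
  | p :: l => p = (0%nat, 0%nat) /\ steps_ok p l /\
              last c (0%nat, 0%nat) = (Nat.pred n, Nat.pred m)
  end.

(* F(A,B) <= delta, with F the discrete Frechet distance
   (min over couplings of the max distance along the coupling). *)
Definition frechet_le (A B : list point) (delta : R) : Prop :=
  exists c, is_coupling (length A) (length B) c /\
    forall p, In p c -> dist (nth (fst p) A []) (nth (snd p) B []) <= delta.

Inductive sublist {T : Type} : list T -> list T -> Prop :=
  | sublist_nil : sublist [] []
  | sublist_skip x l l' : sublist l l' -> sublist l (x :: l')
  | sublist_keep x l l' : sublist l l' -> sublist (x :: l) (x :: l').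

(* F_c(A,B) <= delta : one-sided Frechet distance with shortcuts on B. *)
Definition frechet_c_le (A B : list point) (delta : R) : Prop :=
  exists B', sublist B' B /\ B' <> [] /\ frechet_le A B' delta.

(* A ball (center, radius). *)
Definition ball := (point * R)%type.

Definition realizes (d : nat) (W : list ball) (B : list point) : Prop :=
  length B = length W /\
  forall j, (j < length W)%nat ->
    length (nth j B []) = d /\
    dist (nth j B []) (fst (nth j W ([], 0))) <= snd (nth j W ([], 0)).

(* F^max_1(U,W) <= delta, for U a sequence of precise points (its only
   realization is U itself) and W a sequence of closed balls in R^d. *)
Definition Fmax_le (d : nat) (U : list point) (W : list ball) (delta : R) : Prop :=
  forall B, realizes d W B -> frechet_c_le U B delta.

(* Integer registers ir, real registers rr (both indexed by nat, a program
   uses only finitely many), an integer memory im and a real memory rm,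
   both indirectly addressed through integer registers.  Every
   instruction costs one time unit. *)
Inductive instr : Type :=
  | IConst (i : nat) (k : nat)
  | IAdd (i j k : nat)
  | ISub (i j k : nat)
  | IJle (i j : nat) (t : nat)
  | ILoad (i a : nat)
  | IStore (a i : nat)
  | RConst (x : nat) (z : Z)
  | RAdd (x y z : nat)
  | RSub (x y z : nat)
  | RMul (x y z : nat)
  | RDiv (x y z : nat)
  | RSqrt (x y : nat)
  | RJle (x y : nat) (t : nat)
  | RLoad (x a : nat)
  | RStore (a x : nat)
  | Halt.

Definition program := list instr.

Record state := mkState {
  pc : nat;
  ir : nat -> nat;
  rr : nat -> R;
  im : nat -> nat;
  rm : nat -> R;
  hw : nat  (* high-water mark: 1 + largest memory address accessed *)
}.

Definition upd {T : Type} (f : nat -> T) (a : nat) (v : T) : nat -> T :=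
  fun b => if Nat.eqb b a then v else f b.

Definition halted (P : program) (s : state) : Prop :=
  nth (pc s) P Halt = Halt.

Definition step (P : program) (s : state) : state :=
  let nx := S (pc s) in
  match nth (pc s) P Halt with
  | IConst i k => mkState nx (upd (ir s) i k) (rr s) (im s) (rm s) (hw s)
  | IAdd i j k => mkState nx (upd (ir s) i (ir s j + ir s k)%nat) (rr s) (im s) (rm s) (hw s)
  | ISub i j k => mkState nx (upd (ir s) i (ir s j - ir s k)%nat) (rr s) (im s) (rm s) (hw s)
  | IJle i j t => mkState (if Nat.leb (ir s i) (ir s j) then t else nx)
                    (ir s) (rr s) (im s) (rm s) (hw s)
  | ILoad i a => mkState nx (upd (ir s) i (im s (ir s a))) (rr s) (im s) (rm s)
                    (Nat.max (hw s) (S (ir s a)))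
  | IStore a i => mkState nx (ir s) (rr s) (upd (im s) (ir s a) (ir s i)) (rm s)
                    (Nat.max (hw s) (S (ir s a)))
  | RConst x z => mkState nx (ir s) (upd (rr s) x (IZR z)) (im s) (rm s) (hw s)
  | RAdd x y z => mkState nx (ir s) (upd (rr s) x (rr s y + rr s z)) (im s) (rm s) (hw s)
  | RSub x y z => mkState nx (ir s) (upd (rr s) x (rr s y - rr s z)) (im s) (rm s) (hw s)
  | RMul x y z => mkState nx (ir s) (upd (rr s) x (rr s y * rr s z)) (im s) (rm s) (hw s)
  | RDiv x y z => mkState nx (ir s) (upd (rr s) x (rr s y / rr s z)) (im s) (rm s) (hw s)
  | RSqrt x y => mkState nx (ir s) (upd (rr s) x (sqrt (rr s y))) (im s) (rm s) (hw s)
  | RJle x y t => mkState (if Rle_dec (rr s x) (rr s y) then t else nx)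
                    (ir s) (rr s) (im s) (rm s) (hw s)
  | RLoad x a => mkState nx (ir s) (upd (rr s) x (rm s (ir s a))) (im s) (rm s)
                    (Nat.max (hw s) (S (ir s a)))
  | RStore a x => mkState nx (ir s) (rr s) (im s) (upd (rm s) (ir s a) (rr s x))
                    (Nat.max (hw s) (S (ir s a)))
  | Halt => s
  end.

Fixpoint run (P : program) (t : nat) (s : state) : state :=
  match t with
  | O => s
  | S t' => run P t' (step P s)
  end.

(* Input encoding: ir 0 = d, ir 1 = n, ir 2 = m, rr 0 = delta; real memory
   holds the coordinates of u_1..u_n (address i*d+k for coordinate k of
   u_(i+1)), then those of the centers of w_1..w_m (address (n+j)*d+k),
   then the radii (address (n+m)*d+j). *)
Definition input_mem (d : nat) (U : list point) (W : list ball) : nat -> R :=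
  let n := length U in let m := length W in
  fun a =>
    if Nat.ltb a (n * d) then nth (a mod d) (nth (a / d) U []) 0
    else if Nat.ltb a ((n + m) * d) then
      nth ((a - n * d) mod d) (fst (nth ((a - n * d) / d) W ([], 0))) 0
    else if Nat.ltb a ((n + m) * d + m) then
      snd (nth (a - (n + m) * d) W ([], 0))
    else 0.

Definition init_state (d : nat) (U : list point) (W : list ball) (delta : R) : state :=
  mkState 0
    (fun i => match i with O => d | 1%nat => length U | 2%nat => length W | _ => 0%nat end)
    (fun x => match x with O => delta | _ => 0 end)
    (fun _ => 0%nat)
    (input_mem d U W)
    ((length U + length W) * d + length W)%nat.

(* Main.v *)
Require Import Defs.
From Stdlib Require Import Reals Lra Lia List ZArith Arith.
Import ListNotations.
Import Defs.
Open Scope R_scope.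

Lemma sqsum_sym a b : sqsum a b = sqsum b a.
Proof. revert b; induction a as [|x a IH]; destruct b; simpl; auto. rewrite IH; ring. Qed.

Lemma sqsum_nonneg a b : 0 <= sqsum a b.
Proof. revert b; induction a as [|x a IH]; intros [|y b]; simpl; try lra.
  specialize (IH b). pose proof (Rle_0_sqr (x-y)). unfold Rsqr in *. lra. Qed.

Lemma dist_sym a b : dist a b = dist b a.
Proof. unfold dist; now rewrite sqsum_sym. Qed.

Lemma dist_nonneg a b : 0 <= dist a b.
Proof. apply sqrt_pos. Qed.

Lemma sqsum_self a : sqsum a a = 0.
Proof. induction a; simpl; auto. rewrite IHa; ring. Qed.

Lemma sq_le a b : 0 <= b -> a * a <= b * b -> a <= b.
Proof. intros Hb H. destruct (Rle_dec a b) as [|Hn]; auto.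
  assert (0 < a - b) by lra. assert (0 < a + b) by lra.
  assert (0 < (a - b) * (a + b)) by (apply Rmult_lt_0_compat; lra). nra. Qed.

Fixpoint dot3 (a b c : point) : R :=
  match a, b, c with
  | x :: a', y :: b', z :: c' => (x - y) * (y - z) + dot3 a' b' c'
  | _, _, _ => 0
  end.

Lemma expand3 a b c : length a = length b -> length b = length c ->
  sqsum a c = sqsum a b + sqsum b c + 2 * dot3 a b c.
Proof.
  revert b c; induction a as [|x a IH]; intros [|y b] [|z c]; simpl; intros H1 H2;
    try discriminate; try lra.
  rewrite (IH b c) by lia. ring.
Qed.

Lemma cs3 a b c : dot3 a b c * dot3 a b c <= sqsum a b * sqsum b c.
Proof.
  revert b c; induction a as [|x a IH]; intros [|y b] [|z c]; simpl; try lra.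
  specialize (IH b c).
  pose proof (sqsum_nonneg a b) as HX. pose proof (sqsum_nonneg b c) as HY.
  set (X := sqsum a b) in *. set (Y := sqsum b c) in *. set (t := dot3 a b c) in *.
  set (p := x - y). set (q := y - z).
  assert (Hp : 0 <= p*p) by apply Rle_0_sqr. assert (Hq : 0 <= q*q) by apply Rle_0_sqr.
  assert (H1 : 0 <= X * (q*q) + Y * (p*p)).
  { apply Rplus_le_le_0_compat; apply Rmult_le_pos; auto. }
  assert (H2 : (2 * t * p * q) * (2 * t * p * q) <= (X * (q*q) + Y * (p*p)) * (X * (q*q) + Y * (p*p))).
  { assert (E : (X * (q*q) + Y * (p*p)) * (X * (q*q) + Y * (p*p)) =
               (X*(q*q) - Y*(p*p))*(X*(q*q) - Y*(p*p)) + 4 * (X*Y) * (p*p*(q*q))) by ring.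
    rewrite E. assert (Hpq : 0 <= p*p*(q*q)) by (apply Rmult_le_pos; auto).
    assert (H5 : t*t*(p*p*(q*q)) <= (X*Y)*(p*p*(q*q))) by (apply Rmult_le_compat_r; auto).
    pose proof (Rle_0_sqr (X*(q*q) - Y*(p*p))). unfold Rsqr in *.
    replace ((2 * t * p * q) * (2 * t * p * q)) with (4 * (t*t*(p*p*(q*q)))) by ring. lra. }
  assert (H3 : 2 * t * p * q <= X * (q*q) + Y * (p*p)) by (apply sq_le; auto).
  replace ((t + p * q) * (t + p * q)) with (t*t + 2*t*p*q + (p*p)*(q*q)) by ring.
  replace ((p * p + X) * (q * q + Y)) with (X*Y + (X*(q*q) + Y*(p*p)) + (p*p)*(q*q)) by ring.
  lra.
Qed.

Lemma triangle a b c : length a = length b -> length b = length c ->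
  dist a c <= dist a b + dist b c.
Proof.
  intros H1 H2. unfold dist. pose proof (sqsum_nonneg a c) as HZ.
  rewrite (expand3 a b c H1 H2) in *.
  pose proof (cs3 a b c). pose proof (sqsum_nonneg a b) as HX. pose proof (sqsum_nonneg b c) as HY.
  set (X := sqsum a b) in *. set (Y := sqsum b c) in *. set (t := dot3 a b c) in *.
  pose proof (sqrt_pos X). pose proof (sqrt_pos Y).
  pose proof (sqrt_sqrt X HX) as Hsx. pose proof (sqrt_sqrt Y HY) as Hsy.
  assert (Ht : t <= sqrt X * sqrt Y).
  { apply sq_le. apply Rmult_le_pos; auto.
    replace ((sqrt X * sqrt Y) * (sqrt X * sqrt Y)) with (X * Y); [auto|].
    rewrite <- Hsx at 1. rewrite <- Hsy at 1. ring. }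
  apply Rsqr_incr_0_var.
  - unfold Rsqr. rewrite sqrt_sqrt by lra.
    replace ((sqrt X + sqrt Y) * (sqrt X + sqrt Y)) with (sqrt X * sqrt X + sqrt Y * sqrt Y + 2 * (sqrt X * sqrt Y)) by ring.
    lra.
  - lra.
Qed.

Fixpoint mk (c u : point) (t : R) : point :=
  match c, u with
  | x :: c', y :: u' => (x + t * (x - y)) :: mk c' u' t
  | _, _ => []
  end.

Lemma mk_len c u t : length c = length u -> length (mk c u t) = length c.
Proof. revert u; induction c; intros [|y u]; simpl; intros; try lia; auto. Qed.

Lemma mk_sq1 c u t : sqsum (mk c u t) c = t * t * sqsum c u.
Proof. revert u; induction c as [|x c IH]; intros [|y u]; simpl; try ring.
  rewrite IH; ring. Qed.

Lemma mk_sq2 c u t : sqsum u (mk c u t) = (1 + t) * (1 + t) * sqsum u c.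
Proof. revert u; induction c as [|x c IH]; intros [|y u]; simpl; try ring.
  rewrite IH; ring. Qed.

Definition bump (c : point) (r : R) : point :=
  match c with x :: c' => (x + r) :: c' | [] => [] end.

Definition far (u : point) (w : ball) : point :=
  let c := fst w in let r := snd w in
  if Rle_dec (dist u c) 0 then bump c r else mk c u (r / dist u c).

Lemma far_ok d u w delta : (1 <= d)%nat -> length u = d -> length (fst w) = d -> 0 <= snd w ->
  delta < dist u (fst w) + snd w ->
  length (far u w) = d /\ dist (far u w) (fst w) <= snd w /\ delta < dist u (far u w).
Proof.
  intros Hd Hu Hc Hr Hlt. unfold far.
  destruct w as [c r]; simpl in *.
  destruct (Rle_dec (dist u c) 0) as [H0|H0].
  - assert (HD : dist u c = 0) by (pose proof (dist_nonneg u c); lra).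
    assert (Hb : dist (bump c r) c = r).
    { destruct c as [|x c']; simpl in *; [lia|].
      unfold dist; simpl. rewrite sqsum_self.
      replace (x + r - x) with r by ring. rewrite Rplus_0_r. apply sqrt_square; auto. }
    assert (Hlb : length (bump c r) = d) by (destruct c; simpl in *; lia).
    split; [auto|split; [lra|]].
    pose proof (triangle c u (bump c r) ltac:(lia) ltac:(lia)) as T.
    rewrite (dist_sym c u), HD, (dist_sym c (bump c r)), Hb in T. lra.
  - assert (HD : 0 < dist u c) by lra.
    set (D := dist u c) in *.
    assert (HX : sqrt (sqsum c u) = D) by (unfold D, dist; now rewrite sqsum_sym).
    assert (Ht : 0 <= r / D) by (unfold Rdiv; apply Rmult_le_pos; [lra| left; apply Rinv_0_lt_compat; lra]).
    split; [rewrite mk_len; lia|split].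
    + unfold dist at 1. rewrite mk_sq1. rewrite sqrt_mult_alt by (apply Rle_0_sqr).
      rewrite sqrt_square by auto. rewrite HX. unfold Rdiv. rewrite Rmult_assoc, Rinv_l by lra. lra.
    + unfold dist at 1. rewrite mk_sq2. rewrite sqrt_mult_alt by (apply Rle_0_sqr).
      rewrite sqrt_square by lra. fold (dist u c). fold D.
      replace ((1 + r / D) * D) with (D + r) by (field; lra). lra.
Qed.


Fixpoint pref (f : point -> bool) (l : list point) : nat :=
  match l with [] => 0%nat | x :: l' => if f x then S (pref f l') else 0%nat end.

Definition nxt (f : point -> bool) (U : list point) (i : nat) : nat :=
  (i + pref f (skipn i U))%nat.

Lemma pref_le f l : (pref f l <= length l)%nat.
Proof. induction l; simpl; try destruct (f a); simpl; lia. Qed.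

Lemma pref_true f l k : (k < pref f l)%nat -> f (nth k l []) = true.
Proof. revert k; induction l as [|x l IH]; intros k; simpl; [lia|].
  destruct (f x) eqn:E; [|lia]. destruct k; auto. intros; apply IH; lia. Qed.

Lemma pref_false f l : (pref f l < length l)%nat -> f (nth (pref f l) l []) = false.
Proof. induction l as [|x l IH]; simpl; [lia|].
  destruct (f x) eqn:E; auto. intros; apply IH; lia. Qed.

Section Nxt.
Variable f : point -> bool.
Variable U : list point.

Lemma nxt_ge i : (i <= nxt f U i)%nat.
Proof. unfold nxt; lia. Qed.

Lemma nxt_le i : (i <= length U)%nat -> (nxt f U i <= length U)%nat.
Proof. unfold nxt; intros. pose proof (pref_le f (skipn i U)). rewrite length_skipn in H0. lia. Qed.

Lemma nxt_true i k : (i <= k)%nat -> (k < nxt f U i)%nat -> f (nth k U []) = true.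
Proof. unfold nxt; intros. replace k with (i + (k - i))%nat by lia.
  rewrite <- nth_skipn. apply pref_true. lia. Qed.

Lemma nxt_false i : (nxt f U i < length U)%nat -> f (nth (nxt f U i) U []) = false.
Proof. unfold nxt; intros. rewrite <- nth_skipn. apply pref_false.
  rewrite length_skipn. lia. Qed.

Lemma nxt_char i s : (i <= s)%nat -> (s <= length U)%nat ->
  (forall k, (i <= k)%nat -> (k < s)%nat -> f (nth k U []) = true) ->
  (s = length U \/ f (nth s U []) = false) -> nxt f U i = s.
Proof.
  intros H1 H2 H3 H4.
  assert (Hi : (i <= length U)%nat) by lia.
  pose proof (nxt_ge i). pose proof (nxt_le i Hi).
  destruct (Nat.lt_trichotomy (nxt f U i) s) as [Hl|[He|Hg]]; auto.
  - pose proof (H3 _ (nxt_ge i) Hl). pose proof (nxt_false i ltac:(lia)). congruence.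
  - pose proof (nxt_true i s H1 Hg). destruct H4; [lia|congruence].
Qed.

Lemma nxt_mono i i' : (i <= i')%nat -> (i' <= length U)%nat -> (nxt f U i <= nxt f U i')%nat.
Proof.
  intros H1 H2. pose proof (nxt_ge i'). pose proof (nxt_le i' H2).
  destruct (Nat.le_gt_cases (nxt f U i) (nxt f U i')) as [|Hg]; auto.
  assert (Ht : f (nth (nxt f U i') U []) = true) by (apply (nxt_true i); lia).
  assert (Hlt : (nxt f U i' < length U)%nat) by (pose proof (nxt_le i ltac:(lia)); lia).
  pose proof (nxt_false i' Hlt). congruence.
Qed.

Lemma nxt_cons_true i : (i < length U)%nat -> f (nth i U []) = true -> nxt f U i = nxt f U (S i).
Proof.
  intros H1 H2. unfold nxt.
  assert (E : skipn i U = nth i U [] :: skipn (S i) U).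
  { clear H2. revert i H1; induction U as [|x l IH]; intros i H1; simpl in *; [lia|].
    destruct i; simpl; auto. rewrite IH by lia. destruct l; simpl in *; [lia|]; auto. }
  rewrite E. simpl. rewrite H2. lia.
Qed.

Lemma nxt_cons_false i : f (nth i U []) = false -> nxt f U i = i.
Proof.
  intros H2. unfold nxt.
  destruct (Nat.lt_ge_cases i (length U)) as [H1|H1].
  - assert (E : skipn i U = nth i U [] :: skipn (S i) U).
    { clear H2. revert i H1; induction U as [|x l IH]; intros i H1; simpl in *; [lia|].
      destruct i; simpl; auto. rewrite IH by lia. destruct l; simpl in *; [lia|]; auto. }
    rewrite E. simpl. rewrite H2. lia.
  - rewrite skipn_all2 by lia. simpl. lia.
Qed.

Lemma nxt_end i : (length U <= i)%nat -> nxt f U i = i.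
Proof. intros; unfold nxt; rewrite skipn_all2 by lia; simpl; lia. Qed.

End Nxt.

Lemma skipn_cons_nth (U : list point) i : (i < length U)%nat ->
  skipn i U = nth i U [] :: skipn (S i) U.
Proof. revert i; induction U as [|x l IH]; intros i H1; simpl in *; [lia|].
  destruct i; simpl; auto. rewrite IH by lia. destruct l; simpl in *; [lia|]; auto. Qed.

Lemma firstn_S_app {A} (l : list A) j d : (j < length l)%nat ->
  firstn (S j) l = firstn j l ++ [nth j l d].
Proof. revert j; induction l as [|x l IH]; intros j H; simpl in *; [lia|].
  destruct j; simpl; auto. rewrite IH by lia. auto. Qed.

Section Greedy.
Variable delta : R.
Variable U : list point.

Definition closeb (b u : point) : bool := if Rle_dec (dist u b) delta then true else false.
Definition certb (w : ball) (u : point) : bool :=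
  if Rle_dec (dist u (fst w) + snd w) delta then true else false.

Definition cg (Ws : list ball) (i : nat) : nat := fold_left (fun i w => nxt (certb w) U i) Ws i.
Definition ag (Bs : list point) (i : nat) : nat := fold_left (fun i b => nxt (closeb b) U i) Bs i.

Lemma ag_le Bs i : (i <= length U)%nat -> (ag Bs i <= length U)%nat.
Proof. revert i; induction Bs; simpl; auto. intros; apply IHBs, nxt_le; auto. Qed.

Lemma ag_ge Bs i : (i <= ag Bs i)%nat.
Proof. revert i; induction Bs; simpl; auto. intros. pose proof (nxt_ge (closeb a) U i).
  specialize (IHBs (nxt (closeb a) U i)). lia. Qed.

Lemma ag_sub B' B : sublist B' B -> forall i i', (i <= i')%nat -> (i' <= length U)%nat ->
  (ag B' i <= ag B i')%nat.
Proof.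
  induction 1; intros i i' H1 H2; simpl; auto.
  - apply IHsublist; auto. { pose proof (nxt_ge (closeb x) U i'). lia. } apply nxt_le; auto.
  - apply IHsublist. apply nxt_mono; auto. apply nxt_le; auto.
Qed.

Lemma last_def {A} (l : list A) q d d' : last (q :: l) d = last (q :: l) d'.
Proof. revert q; induction l as [|a l IH]; intros; [reflexivity|].
  change (last (a :: l) d = last (a :: l) d'). apply IH. Qed.

Lemma last_cons2 {A} (l : list A) p q d : last (p :: q :: l) d = last (q :: l) q.
Proof. change (last (q :: l) d = last (q :: l) q). apply last_def. Qed.

Lemma steps_bound p l : steps_ok p l ->
  forall q, In q (p :: l) -> (fst q <= fst (last (p :: l) p))%nat /\ (snd q <= snd (last (p :: l) p))%nat.
Proof.
  revert p; induction l as [|q0 l IH]; intros p H q Hq.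
  - simpl in Hq; destruct Hq as [<-|[]]; simpl; lia.
  - destruct H as [Hv H]. specialize (IH q0 H).
    rewrite last_cons2.
    destruct Hq as [<-|Hq].
    + destruct (IH q0 (or_introl eq_refl)). unfold valid_step in Hv. lia.
    + apply IH; auto.
Qed.

Lemma key_step b x a : (a <= nxt (closeb b) U x)%nat -> (x <= length U)%nat -> (a < length U)%nat ->
  dist (nth a U []) b <= delta -> (S a <= nxt (closeb b) U x)%nat.
Proof.
  intros H1 Hx H2 H3. destruct (Nat.eq_dec (nxt (closeb b) U x) a) as [E|E]; [|lia].
  exfalso. pose proof (nxt_false (closeb b) U x ltac:(lia)) as F. rewrite E in F.
  unfold closeb in F. destruct (Rle_dec _ _); congruence.
Qed.

Lemma frechet_greedy Bp : U <> [] -> Bp <> [] -> frechet_le U Bp delta ->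
  (length U <= ag Bp 0)%nat.
Proof.
  intros HU HB [c [Hc Hd]].
  set (n := length U) in *. set (m := length Bp) in *.
  assert (Hn : (1 <= n)%nat) by (destruct U; simpl in *; [congruence|lia]).
  assert (Hm : (1 <= m)%nat) by (destruct Bp; simpl in *; [congruence|lia]).
  set (g := fun j => ag (firstn j Bp) 0).
  assert (Hg : forall j, (j < m)%nat -> g (S j) = nxt (closeb (nth j Bp [])) U (g j)).
  { intros j Hj. unfold g. rewrite (firstn_S_app Bp j []) by auto. unfold ag. rewrite fold_left_app. reflexivity. }
  assert (Hgle : forall j, (g j <= n)%nat) by (intros; apply ag_le; lia).
  assert (Hgmono : forall j, (j < m)%nat -> (g j <= g (S j))%nat) by (intros; rewrite Hg; auto; apply nxt_ge).
  destruct c as [|p l]; [contradiction|]. destruct Hc as [Hp [Hs Hlast]].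
  pose proof (steps_bound p l Hs) as Hb. rewrite (last_def l p p (0,0)%nat), Hlast in Hb. simpl in Hb.
  assert (Hin : forall q, In q (p :: l) -> (fst q < n)%nat /\ (snd q < m)%nat /\
     dist (nth (fst q) U []) (nth (snd q) Bp []) <= delta).
  { intros q Hq. destruct (Hb q Hq). repeat split; try lia. apply Hd; auto. }
  assert (Hmain : forall l0 p0, steps_ok p0 l0 -> (forall q, In q (p0 :: l0) -> In q (p :: l)) ->
     (S (fst p0) <= g (S (snd p0)))%nat -> (S (fst (last (p0 :: l0) p0)) <= g (S (snd (last (p0 :: l0) p0))))%nat).
  { induction l0 as [|q l0 IH]; intros p0 Hs0 Hsub Hp0; simpl; auto.
    destruct Hs0 as [Hv Hs0].
    change (match l0 with [] => q | _ :: _ => last l0 p0 end) with (last (p0 :: q :: l0) p0).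
    rewrite last_cons2.
    apply IH; auto. { intros q' Hq'; apply Hsub; simpl in *; tauto. }
    destruct (Hin q (Hsub q (or_intror (or_introl eq_refl)))) as [Hq1 [Hq2 Hq3]].
    destruct (Hin p0 (Hsub p0 (or_introl eq_refl))) as [Hp1 [Hp2 Hp3]].
    unfold valid_step in Hv. destruct Hv as [[E1 E2]|[[E1 E2]|[E1 E2]]].
    - assert (HH : g (S (snd q)) = nxt (closeb (nth (snd q) Bp [])) U (g (snd q))) by (apply Hg; lia).
      rewrite HH. apply key_step; auto. rewrite <- HH. rewrite E2. lia.
    - rewrite E2. pose proof (Hgmono (S (snd p0)) ltac:(lia)). lia.
    - assert (HH : g (S (snd q)) = nxt (closeb (nth (snd q) Bp [])) U (g (snd q))) by (apply Hg; lia).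
      rewrite HH. apply key_step; auto.
      pose proof (nxt_ge (closeb (nth (snd q) Bp [])) U (g (snd q))). rewrite E2 in *. lia. }
  specialize (Hmain l p Hs (fun q H => H)).
  rewrite (last_def l p p (0,0)%nat), Hlast in Hmain. simpl in Hmain.
  assert (E0 : p = (0,0)%nat) by auto. subst p.
  destruct (Hin (0,0)%nat (or_introl eq_refl)) as [_ [_ H00]]. simpl in H00.
  assert (Hg1 : (1 <= g 1)%nat).
  { rewrite Hg by lia. apply key_step; auto; try lia. }
  specialize (Hmain Hg1).
  replace (S (Nat.pred m)) with m in Hmain by lia.
  unfold g, m in Hmain. rewrite firstn_all in Hmain. lia.
Qed.

Lemma fc_greedy B : U <> [] -> frechet_c_le U B delta -> (length U <= ag B 0)%nat.
Proof.
  intros HU [B' [Hs [Hne Hf]]]. pose proof (frechet_greedy B' HU Hne Hf).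
  pose proof (ag_sub B' B Hs 0 0 ltac:(lia) ltac:(lia)). lia.
Qed.

End Greedy.

Lemma certb_false delta w u : certb delta w u = false -> delta < dist u (fst w) + snd w.
Proof. unfold certb; destruct (Rle_dec _ _); [discriminate|lra]. Qed.
Lemma certb_true delta w u : certb delta w u = true -> dist u (fst w) + snd w <= delta.
Proof. unfold certb; destruct (Rle_dec _ _); [auto|discriminate]. Qed.
Lemma closeb_true delta b u : closeb delta b u = true -> dist u b <= delta.
Proof. unfold closeb; destruct (Rle_dec _ _); [auto|discriminate]. Qed.
Lemma closeb_intro delta b u : dist u b <= delta -> closeb delta b u = true.
Proof. unfold closeb; destruct (Rle_dec _ _); [auto|contradiction]. Qed.
Lemma closeb_false delta b u : delta < dist u b -> closeb delta b u = false.
Proof. unfold closeb; destruct (Rle_dec _ _); [lra|auto]. Qed.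
Lemma certb_intro_t delta w u : dist u (fst w) + snd w <= delta -> certb delta w u = true.
Proof. unfold certb; destruct (Rle_dec _ _); [auto|contradiction]. Qed.
Lemma certb_intro_f delta w u : ~ dist u (fst w) + snd w <= delta -> certb delta w u = false.
Proof. unfold certb; destruct (Rle_dec _ _); [contradiction|auto]. Qed.


Lemma sublist_nil_l {T} (l : list T) : sublist [] l.
Proof. induction l; constructor; auto. Qed.

Lemma last_map_l {A B} (f : A -> B) l d : last (map f l) (f d) = f (last l d).
Proof. induction l as [|x l IH]; simpl; auto. destruct l; simpl in *; auto. Qed.

Lemma steps_ok_map (sh : nat * nat -> nat * nat) :
  (forall p q, valid_step p q -> valid_step (sh p) (sh q)) ->
  forall l p, steps_ok p l -> steps_ok (sh p) (map sh l).
Proof. intros Hsh; induction l; simpl; auto. intros p [H1 H2]; split; auto. Qed.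

Definition sh1 (p : nat * nat) : nat * nat := (S (fst p), snd p).
Definition sh2 (p : nat * nat) : nat * nat := (S (fst p), S (snd p)).

Lemma sh1_ok p q : valid_step p q -> valid_step (sh1 p) (sh1 q).
Proof. unfold valid_step, sh1; simpl; lia. Qed.
Lemma sh2_ok p q : valid_step p q -> valid_step (sh2 p) (sh2 q).
Proof. unfold valid_step, sh2; simpl; lia. Qed.

Lemma last_pre (sh : nat * nat -> nat * nat) p l :
  last ((0,0)%nat :: map sh (p :: l)) (0,0)%nat = sh (last (p :: l) (0,0)%nat).
Proof.
  simpl map. rewrite last_cons2. change (sh p :: map sh l) with (map sh (p :: l)).
  rewrite last_map_l. f_equal. apply last_def.
Qed.

Section Constr.
Variable delta : R.

Definition Rw (A : list point) (b : point) (B : list point) : Prop :=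
  exists B', sublist B' B /\ frechet_le A (b :: B') delta.

Lemma F1 a b B : dist a b <= delta -> Rw [a] b B.
Proof.
  intros H. exists []. split; [apply sublist_nil_l|].
  exists [(0,0)%nat]. split. { simpl. repeat split; auto. }
  intros p [<-|[]]. simpl. auto.
Qed.

Lemma F2 a b A B : dist a b <= delta -> A <> [] -> Rw A b B -> Rw (a :: A) b B.
Proof.
  intros H HA [B' [Hs [c [Hc Hd]]]]. exists B'. split; auto.
  destruct c as [|p l]; [contradiction|]. destruct Hc as [Hp [Hst Hl]]. subst p.
  exists ((0,0)%nat :: map sh1 ((0,0)%nat :: l)). split.
  - cbv beta iota delta [is_coupling]. split; auto. split.
    + simpl. split. { unfold valid_step; simpl; lia. }
      apply (steps_ok_map sh1 sh1_ok l (0,0)%nat Hst).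
    + rewrite last_pre, Hl. unfold sh1; simpl.
      destruct A; [congruence|]. simpl. auto.
  - intros p [<-|Hp]. { simpl; auto. }
    apply in_map_iff in Hp. destruct Hp as [q [<- Hq]]. unfold sh1; simpl. apply Hd; auto.
Qed.

Lemma F3 a b A B : dist a b <= delta -> A <> [] -> frechet_c_le A B delta -> Rw (a :: A) b B.
Proof.
  intros H HA [B0 [Hs [HB0 [c [Hc Hd]]]]]. exists B0. split; auto.
  destruct c as [|p l]; [contradiction|]. destruct Hc as [Hp [Hst Hl]]. subst p.
  exists ((0,0)%nat :: map sh2 ((0,0)%nat :: l)). split.
  - cbv beta iota delta [is_coupling]. split; auto. split.
    + simpl. split. { unfold valid_step; simpl; lia. }
      apply (steps_ok_map sh2 sh2_ok l (0,0)%nat Hst).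
    + rewrite last_pre, Hl. unfold sh2; simpl.
      destruct A; [congruence|]. destruct B0; [congruence|]. simpl. auto.
  - intros p [<-|Hp]. { simpl; auto. }
    apply in_map_iff in Hp. destruct Hp as [q [<- Hq]]. unfold sh2; simpl. apply Hd; auto.
Qed.

Lemma F4 A b B : Rw A b B -> frechet_c_le A (b :: B) delta.
Proof. intros [B' [Hs Hf]]. exists (b :: B'). split; [apply sublist_keep; auto|]. split; [congruence|auto]. Qed.

Lemma F5 A x B : frechet_c_le A B delta -> frechet_c_le A (x :: B) delta.
Proof. intros [B' [Hs Hf]]. exists B'. split; [apply sublist_skip; auto|auto]. Qed.

End Constr.

Section Main.
Variable d : nat.
Variable delta : R.
Variable U : list point.
Hypothesis Hd : (1 <= d)%nat.
Hypothesis Hdelta : 0 < delta.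
Hypothesis HU : forall u, In u U -> length u = d.

Lemma nth_U_len i : (i < length U)%nat -> length (nth i U []) = d.
Proof. intros; apply HU, nth_In; auto. Qed.

Lemma cert_close w u b : certb delta w u = true -> length u = d -> length (fst w) = d ->
  length b = d -> dist b (fst w) <= snd w -> closeb delta b u = true.
Proof.
  unfold certb, closeb; intros H1 H2 H3 H4 H5.
  destruct (Rle_dec (dist u (fst w) + snd w) delta); [|discriminate].
  destruct (Rle_dec (dist u b) delta); auto. exfalso.
  pose proof (triangle u (fst w) b ltac:(lia) ltac:(lia)). rewrite (dist_sym (fst w) b) in H. lra.
Qed.

Definition choose (w : ball) (i : nat) : point :=
  let s := nxt (certb delta w) U i in
  if Nat.ltb s (length U) then far (nth s U []) w else fst w.

Fixpoint advB (Ws : list ball) (i : nat) : list point :=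
  match Ws with [] => [] | w :: Ws' => choose w i :: advB Ws' (nxt (certb delta w) U i) end.

Lemma choose_ok w i : length (fst w) = d -> 0 <= snd w ->
  length (choose w i) = d /\ dist (choose w i) (fst w) <= snd w.
Proof.
  intros H1 H2. unfold choose.
  destruct (Nat.ltb_spec (nxt (certb delta w) U i) (length U)) as [Hl|Hl].
  - pose proof (certb_false _ _ _ (nxt_false (certb delta w) U i Hl)) as Hn.
    destruct (far_ok d (nth (nxt (certb delta w) U i) U []) w delta Hd (nth_U_len _ Hl) H1 H2) as [A [B _]].
    exact Hn. auto.
  - split; auto. unfold dist. rewrite sqsum_self, sqrt_0. auto.
Qed.

Lemma advB_len Ws i : length (advB Ws i) = length Ws.
Proof. revert i; induction Ws; simpl; auto. Qed.

Lemma advB_nth Ws : (forall w, In w Ws -> length (fst w) = d /\ 0 <= snd w) ->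
  forall i j, (j < length Ws)%nat ->
  length (nth j (advB Ws i) []) = d /\ dist (nth j (advB Ws i) []) (fst (nth j Ws ([], 0))) <= snd (nth j Ws ([], 0)).
Proof.
  induction Ws as [|w Ws IH]; intros HW i j Hj; simpl in *; [lia|].
  destruct j.
  - destruct (HW w (or_introl eq_refl)). apply choose_ok; auto.
  - apply IH; auto. lia.
Qed.

Lemma ag_adv Ws i : (forall w, In w Ws -> length (fst w) = d /\ 0 <= snd w) ->
  (i <= length U)%nat -> ag delta U (advB Ws i) i = cg delta U Ws i.
Proof.
  revert i; induction Ws as [|w Ws IH]; intros i HW Hi; simpl; auto.
  unfold ag, cg in *. simpl.
  destruct (HW w (or_introl eq_refl)) as [Hw1 Hw2].
  set (s := nxt (certb delta w) U i).
  assert (E : nxt (closeb delta (choose w i)) U i = s).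
  { destruct (choose_ok w i Hw1 Hw2) as [Hc1 Hc2].
    apply nxt_char.
    - apply nxt_ge.
    - apply nxt_le; auto.
    - intros k Hk1 Hk2. apply (cert_close w); auto.
      + apply (nxt_true (certb delta w) U i k); auto.
      + apply nth_U_len. pose proof (nxt_le (certb delta w) U i Hi). fold s in H. lia.
    - destruct (Nat.ltb_spec s (length U)) as [Hl|Hl]; [right|left; pose proof (nxt_le (certb delta w) U i Hi); fold s in H; lia].
      unfold choose. fold s. destruct (Nat.ltb_spec s (length U)); [|lia].
      pose proof (certb_false _ _ _ (nxt_false (certb delta w) U i Hl)) as Hn. fold s in Hn.
      destruct (far_ok d (nth s U []) w delta Hd (nth_U_len _ Hl) Hw1 Hw2 Hn) as [_ [_ C]].
      apply closeb_false; auto. }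
  rewrite E. apply IH. { intros; apply HW; simpl; auto. } apply nxt_le; auto.
Qed.

Definition relWB (w : ball) (b : point) : Prop :=
  length (fst w) = d /\ length b = d /\ dist b (fst w) <= snd w.

Lemma rev_main : forall Ws Bs, Forall2 relWB Ws Bs ->
  forall i, (i < length U)%nat -> (length U <= cg delta U Ws i)%nat ->
  frechet_c_le (skipn i U) Bs delta.
Proof.
  induction 1 as [|w b Ws Bs Hwb HF IH]; intros i Hi Hc.
  - unfold cg in Hc; simpl in Hc. lia.
  - unfold cg in Hc; simpl in Hc. fold (cg delta U Ws (nxt (certb delta w) U i)) in Hc.
    set (s := nxt (certb delta w) U i) in *.
    assert (Hs1 : (i <= s)%nat) by apply nxt_ge.
    assert (Hs2 : (s <= length U)%nat) by (apply nxt_le; lia).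
    destruct Hwb as [Hw1 [Hb1 Hb2]].
    assert (Hcl : forall t, (i <= t)%nat -> (t < s)%nat -> dist (nth t U []) b <= delta).
    { intros t H1 H2. assert (C : closeb delta b (nth t U []) = true).
      { apply (cert_close w); auto. apply (nxt_true (certb delta w) U i t); auto. apply nth_U_len; lia. }
      apply closeb_true; auto. }
    destruct (Nat.eq_dec s i) as [E|E].
    + apply F5. apply IH; auto. rewrite <- E; auto.
    + apply F4.
      assert (Hin : forall k t, (t + S k = s)%nat -> (i <= t)%nat -> Rw delta (skipn t U) b Bs).
      { induction k as [|k IHk]; intros t Ht1 Ht2.
        - rewrite (skipn_cons_nth U t) by lia. replace (S t) with s by lia.
          destruct (Nat.eq_dec s (length U)) as [Es|Es].
          + rewrite Es, skipn_all. apply F1. apply Hcl; lia.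
          + apply F3. apply Hcl; lia.
            * intro Hn. apply (f_equal (@length _)) in Hn. rewrite length_skipn in Hn. simpl in Hn. lia.
            * apply IH; auto. lia.
        - rewrite (skipn_cons_nth U t) by lia. apply F2.
          + apply Hcl; lia.
          + intro Hn. apply (f_equal (@length _)) in Hn. rewrite length_skipn in Hn. simpl in Hn. lia.
          + apply IHk; lia. }
      apply (Hin (s - i - 1)%nat i); lia.
Qed.

Lemma Forall2_nth_intro {A B} (P : A -> B -> Prop) (l1 : list A) (l2 : list B) d1 d2 :
  length l2 = length l1 -> (forall j, (j < length l1)%nat -> P (nth j l1 d1) (nth j l2 d2)) ->
  Forall2 P l1 l2.
Proof.
  revert l2; induction l1 as [|x l1 IH]; intros [|y l2] H1 H2; simpl in *; try lia; constructor.
  - apply (H2 0%nat); lia.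
  - apply IH; [lia|]. intros j Hj. apply (H2 (S j)); lia.
Qed.

Theorem Fmax_equiv W : U <> [] ->
  (forall w, In w W -> length (fst w) = d /\ 0 <= snd w) ->
  (Fmax_le d U W delta <-> (length U <= cg delta U W 0)%nat).
Proof.
  intros HUn HW. split.
  - intros HF. assert (Hr : realizes d W (advB W 0)).
    { split; [apply advB_len|]. intros j Hj. apply advB_nth; auto. }
    specialize (HF _ Hr). pose proof (fc_greedy delta U (advB W 0) HUn HF).
    rewrite ag_adv in H; auto. lia.
  - intros Hc B [HL HB]. replace U with (skipn 0 U) by auto.
    apply (rev_main W B); auto.
    + apply (Forall2_nth_intro _ _ _ ([], 0) []); auto.
      intros j Hj. destruct (HB j Hj) as [H1 H2]. split; [|split; auto].
      apply HW. apply nth_In; auto.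
    + destruct U; simpl; [congruence|lia].
Qed.

End Main.


Arguments upd {T} f a v b /.

Local Open Scope nat_scope.
Definition prog : program := [
  (* 0 *) IConst 11 1;
  (* 1 *) IConst 12 0;
  (* 2 *) IJle 1 12 6;
  (* 3 *) IAdd 7 7 0;
  (* 4 *) IAdd 12 12 11;
  (* 5 *) IJle 12 12 2;
  (* 6 *) IAdd 9 7 13;
  (* 7 *) IConst 12 0;
  (* 8 *) IJle 2 12 12;
  (* 9 *) IAdd 9 9 0;
  (* 10 *) IAdd 12 12 11;
  (* 11 *) IJle 12 12 8;
  (* 12 *) IJle 2 4 38;
  (* 13 *) IJle 1 3 34;
  (* 14 *) RConst 1 0%Z;
  (* 15 *) IConst 5 0;
  (* 16 *) IJle 0 5 26;
  (* 17 *) IAdd 10 6 5;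
  (* 18 *) RLoad 2 10;
  (* 19 *) IAdd 10 7 5;
  (* 20 *) RLoad 3 10;
  (* 21 *) RSub 4 2 3;
  (* 22 *) RMul 4 4 4;
  (* 23 *) RAdd 1 1 4;
  (* 24 *) IAdd 5 5 11;
  (* 25 *) IJle 5 5 16;
  (* 26 *) RSqrt 1 1;
  (* 27 *) RLoad 2 9;
  (* 28 *) RAdd 1 1 2;
  (* 29 *) RJle 1 0 31;
  (* 30 *) IJle 3 3 34;
  (* 31 *) IAdd 3 3 11;
  (* 32 *) IAdd 6 6 0;
  (* 33 *) IJle 3 3 13;
  (* 34 *) IAdd 4 4 11;
  (* 35 *) IAdd 7 7 0;
  (* 36 *) IAdd 9 9 11;
  (* 37 *) IJle 4 4 12;
  (* 38 *) IConst 0 0;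
  (* 39 *) IJle 1 3 41;
  (* 40 *) Halt;
  (* 41 *) IConst 0 1;
  (* 42 *) Halt ].
Local Close Scope nat_scope.

Definition RS (s : state) (Q : state -> Prop) (B : nat) : Prop :=
  exists t, (t <= B)%nat /\ Q (run prog t s).

Lemma run_add a b s : run prog (a + b) s = run prog b (run prog a s).
Proof. revert s; induction a; intros; simpl; auto. Qed.

Lemma rs_done s (Q : state -> Prop) B : Q s -> RS s Q B.
Proof. intros; exists 0%nat; split; [lia|auto]. Qed.

Lemma rs_step s s' Q B : step prog s = s' -> RS s' Q B -> RS s Q (S B).
Proof. intros E [t [H1 H2]]. exists (S t). split; [lia|]. simpl. rewrite E. auto. Qed.

Lemma rs_seq s (Q1 Q2 : state -> Prop) B1 B2 : RS s Q1 B1 -> (forall s', Q1 s' -> RS s' Q2 B2) -> RS s Q2 (B1 + B2).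
Proof. intros [t1 [H1 H2]] H. destruct (H _ H2) as [t2 [H3 H4]]. exists (t1 + t2)%nat.
  split; [lia|]. rewrite run_add. auto. Qed.

Lemma rs_mono s Q B B' : (B <= B')%nat -> RS s Q B -> RS s Q B'.
Proof. intros H [t [H1 H2]]; exists t; split; [lia|auto]. Qed.

Lemma rs_conseq s (Q Q' : state -> Prop) B : (forall s, Q s -> Q' s) -> RS s Q B -> RS s Q' B.
Proof. intros H [t [H1 H2]]; exists t; split; auto. Qed.

Section StepL.
Variable s : state.
Lemma st_IConst i k : nth (pc s) prog Halt = IConst i k ->
  step prog s = mkState (S (pc s)) (upd (ir s) i k) (rr s) (im s) (rm s) (hw s).
Proof. intros H; unfold step; rewrite H; auto. Qed.
Lemma st_IAdd i j k : nth (pc s) prog Halt = IAdd i j k ->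
  step prog s = mkState (S (pc s)) (upd (ir s) i (ir s j + ir s k)%nat) (rr s) (im s) (rm s) (hw s).
Proof. intros H; unfold step; rewrite H; auto. Qed.
Lemma st_IJle i j t : nth (pc s) prog Halt = IJle i j t ->
  step prog s = mkState (if Nat.leb (ir s i) (ir s j) then t else S (pc s)) (ir s) (rr s) (im s) (rm s) (hw s).
Proof. intros H; unfold step; rewrite H; auto. Qed.
Lemma st_RConst x z : nth (pc s) prog Halt = RConst x z ->
  step prog s = mkState (S (pc s)) (ir s) (upd (rr s) x (IZR z)) (im s) (rm s) (hw s).
Proof. intros H; unfold step; rewrite H; auto. Qed.
Lemma st_RAdd x y z : nth (pc s) prog Halt = RAdd x y z ->
  step prog s = mkState (S (pc s)) (ir s) (upd (rr s) x (rr s y + rr s z)) (im s) (rm s) (hw s).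
Proof. intros H; unfold step; rewrite H; auto. Qed.
Lemma st_RSub x y z : nth (pc s) prog Halt = RSub x y z ->
  step prog s = mkState (S (pc s)) (ir s) (upd (rr s) x (rr s y - rr s z)) (im s) (rm s) (hw s).
Proof. intros H; unfold step; rewrite H; auto. Qed.
Lemma st_RMul x y z : nth (pc s) prog Halt = RMul x y z ->
  step prog s = mkState (S (pc s)) (ir s) (upd (rr s) x (rr s y * rr s z)) (im s) (rm s) (hw s).
Proof. intros H; unfold step; rewrite H; auto. Qed.
Lemma st_RSqrt x y : nth (pc s) prog Halt = RSqrt x y ->
  step prog s = mkState (S (pc s)) (ir s) (upd (rr s) x (sqrt (rr s y))) (im s) (rm s) (hw s).
Proof. intros H; unfold step; rewrite H; auto. Qed.
Lemma st_RJle x y t : nth (pc s) prog Halt = RJle x y t ->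
  step prog s = mkState (if Rle_dec (rr s x) (rr s y) then t else S (pc s)) (ir s) (rr s) (im s) (rm s) (hw s).
Proof. intros H; unfold step; rewrite H; auto. Qed.
Lemma st_RLoad x a : nth (pc s) prog Halt = RLoad x a ->
  step prog s = mkState (S (pc s)) (ir s) (upd (rr s) x (rm s (ir s a))) (im s) (rm s) (Nat.max (hw s) (S (ir s a))).
Proof. intros H; unfold step; rewrite H; auto. Qed.
End StepL.

Ltac fin_nth := cbn [pc]; (reflexivity || eassumption).
Ltac stp := eapply rs_step; [
  first [ eapply st_IConst; fin_nth | eapply st_IAdd; fin_nth | eapply st_IJle; fin_nth
        | eapply st_RConst; fin_nth | eapply st_RAdd; fin_nth
        | eapply st_RSub; fin_nth | eapply st_RMul; fin_nth | eapply st_RSqrt; fin_nth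
        | eapply st_RJle; fin_nth | eapply st_RLoad; fin_nth ]
  | cbn [pc ir rr im rm hw upd Nat.eqb] ].


Definition FrX (l : list nat) (s s' : state) : Prop := forall x, ~ In x l -> ir s' x = ir s x.
Definition FrR (l : list nat) (s s' : state) : Prop := forall x, ~ In x l -> rr s' x = rr s x.

Ltac frame := let x := fresh "x" in let Hx := fresh "Hx" in
  intros x Hx; cbn [upd ir rr];
  repeat match goal with |- context [Nat.eqb x ?k] =>
     let E := fresh "E" in destruct (Nat.eqb_spec x k) as [E|E];
          [subst; exfalso; apply Hx; simpl; tauto|] end;
  reflexivity.

Lemma FrX_trans l s1 s2 s3 : FrX l s1 s2 -> FrX l s2 s3 -> FrX l s1 s3.
Proof. unfold FrX; intros A B x H; rewrite B, A; auto. Qed.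
Lemma FrR_trans l s1 s2 s3 : FrR l s1 s2 -> FrR l s2 s3 -> FrR l s1 s3.
Proof. unfold FrR; intros A B x H; rewrite B, A; auto. Qed.

Lemma loop1 : forall r s, pc s = 2%nat -> (ir s 12 + r = ir s 1)%nat -> ir s 11 = 1%nat ->
  RS s (fun s' => pc s' = 6%nat /\ ir s' 7 = (ir s 7 + r * ir s 0)%nat /\ ir s' 12 = ir s 1 /\
     FrX [7;12]%nat s s' /\ rr s' = rr s /\ rm s' = rm s /\ hw s' = hw s) (4 * r + 1).
Proof.
  induction r as [|r IH]; intros [p0 IR RR IM RM HW] Hp Hc H11; cbn [pc ir rr im rm hw] in *; subst p0.
  - stp. rewrite (proj2 (Nat.leb_le _ _)) by lia.
    apply rs_done. cbn. repeat split; auto; try lia; try frame.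
  - replace (4 * S r + 1)%nat with (S (S (S (S (4 * r + 1))))) by lia.
    stp. rewrite (proj2 (Nat.leb_gt _ _)) by lia.
    stp. stp. stp. rewrite Nat.leb_refl.
    eapply rs_conseq; [|apply IH; cbn; auto; lia].
    intros s' [A1 [A2 [A3 [A4 [A5 [A6 A7]]]]]]. cbn [pc ir rr im rm hw upd Nat.eqb] in *.
    rewrite A2, A3. repeat split; auto; try nia.
    eapply FrX_trans; [|exact A4]. frame.
Qed.

Lemma loop2 : forall r s, pc s = 8%nat -> (ir s 12 + r = ir s 2)%nat -> ir s 11 = 1%nat ->
  RS s (fun s' => pc s' = 12%nat /\ ir s' 9 = (ir s 9 + r * ir s 0)%nat /\ ir s' 12 = ir s 2 /\
     FrX [9;12]%nat s s' /\ rr s' = rr s /\ rm s' = rm s /\ hw s' = hw s) (4 * r + 1).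
Proof.
  induction r as [|r IH]; intros [p0 IR RR IM RM HW] Hp Hc H11; cbn [pc ir rr im rm hw] in *; subst p0.
  - stp. rewrite (proj2 (Nat.leb_le _ _)) by lia.
    apply rs_done. cbn. repeat split; auto; try lia; try frame.
  - replace (4 * S r + 1)%nat with (S (S (S (S (4 * r + 1))))) by lia.
    stp. rewrite (proj2 (Nat.leb_gt _ _)) by lia.
    stp. stp. stp. rewrite Nat.leb_refl.
    eapply rs_conseq; [|apply IH; cbn; auto; lia].
    intros s' [A1 [A2 [A3 [A4 [A5 [A6 A7]]]]]]. cbn [pc ir rr im rm hw upd Nat.eqb] in *.
    rewrite A2, A3. repeat split; auto; try nia.
    eapply FrX_trans; [|exact A4]. frame.
Qed.

Fixpoint psum (u c : point) (k : nat) : R :=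
  match k with
  | O => 0
  | S k' => psum u c k' + (nth k' u 0 - nth k' c 0) * (nth k' u 0 - nth k' c 0)
  end.

Lemma sumloop (u c : point) : forall r s, pc s = 16%nat -> (ir s 5 + r = ir s 0)%nat -> ir s 11 = 1%nat ->
  rr s 1 = psum u c (ir s 5) ->
  (forall k, (k < ir s 0)%nat -> rm s (ir s 6 + k)%nat = nth k u 0 /\ rm s (ir s 7 + k)%nat = nth k c 0) ->
  (ir s 6 + ir s 0 <= hw s)%nat -> (ir s 7 + ir s 0 <= hw s)%nat ->
  RS s (fun s' => pc s' = 26%nat /\ rr s' 1 = psum u c (ir s 0) /\ FrX [5;10]%nat s s' /\
     FrR [1;2;3;4]%nat s s' /\ rm s' = rm s /\ hw s' = hw s) (10 * r + 1).
Proof.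
  induction r as [|r IH]; intros [p0 IR RR IM RM HW] Hp Hc H11 H1 Hm Hb6 Hb7; cbn [pc ir rr im rm hw] in *; subst p0.
  - stp. rewrite (proj2 (Nat.leb_le _ _)) by lia.
    apply rs_done. cbn. rewrite <- Hc, Nat.add_0_r. repeat split; auto; try lia; try frame.
  - replace (10 * S r + 1)%nat with (S (S (S (S (S (S (S (S (S (S (10 * r + 1))))))))))) by lia.
    stp. rewrite (proj2 (Nat.leb_gt _ _)) by lia.
    do 9 stp. rewrite Nat.leb_refl.
    destruct (Hm (IR 5%nat) ltac:(lia)) as [Hu Hcc].
    eapply rs_conseq; [|apply IH; cbn; auto].
    + intros s' [A1 [A2 [A3 [A4 [A5 A6]]]]]. cbn [pc ir rr im rm hw upd Nat.eqb] in *.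
      rewrite A2. repeat split; auto.
      * eapply FrX_trans; [|exact A3]. frame.
      * eapply FrR_trans; [|exact A4]. frame.
      * rewrite A6. lia.
    + lia.
    + rewrite H11, H1, Hu, Hcc. replace (IR 5%nat + 1)%nat with (S (IR 5%nat)) by lia. reflexivity.
    + lia.
    + lia.
Qed.

Lemma psum_cons x y u c k : psum (x :: u) (y :: c) (S k) = (x - y) * (x - y) + psum u c k.
Proof. induction k; simpl in *; [ring|]. rewrite IHk. ring. Qed.

Lemma psum_sqsum u c : length u = length c -> psum u c (length u) = sqsum u c.
Proof. revert c; induction u as [|x u IH]; intros [|y c] H; simpl in *; try lia; auto.
  change (psum (x :: u) (y :: c) (S (length u)) = (x - y) * (x - y) + sqsum u c).
  rewrite psum_cons, IH; auto. Qed.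

Section Input.
Variables (d : nat) (U : list point) (W : list ball).
Hypothesis Hd : (1 <= d)%nat.

Lemma divmod_aux i k : (k < d)%nat -> ((i * d + k) / d = i /\ (i * d + k) mod d = k)%nat.
Proof.
  intros Hk. split.
  - rewrite Nat.div_add_l by lia. rewrite Nat.div_small by lia. lia.
  - rewrite Nat.add_comm, Nat.Div0.mod_add. apply Nat.mod_small; auto.
Qed.

Lemma IM1 i k : (i < length U)%nat -> (k < d)%nat ->
  input_mem d U W (i * d + k)%nat = nth k (nth i U []) 0.
Proof.
  intros Hi Hk. unfold input_mem.
  destruct (divmod_aux i k Hk) as [E1 E2].
  destruct (Nat.ltb_spec (i * d + k) (length U * d)); [|nia].
  rewrite E1, E2. auto.
Qed.

Lemma IM2 j k : (j < length W)%nat -> (k < d)%nat ->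
  input_mem d U W ((length U + j) * d + k)%nat = nth k (fst (nth j W ([], 0))) 0.
Proof.
  intros Hj Hk. unfold input_mem.
  destruct (Nat.ltb_spec ((length U + j) * d + k) (length U * d)); [nia|].
  destruct (Nat.ltb_spec ((length U + j) * d + k) ((length U + length W) * d)); [|nia].
  replace ((length U + j) * d + k - length U * d)%nat with (j * d + k)%nat by nia.
  destruct (divmod_aux j k Hk) as [E1 E2]. rewrite E1, E2. auto.
Qed.

Lemma IM3 j : (j < length W)%nat ->
  input_mem d U W ((length U + length W) * d + j)%nat = snd (nth j W ([], 0)).
Proof.
  intros Hj. unfold input_mem.
  destruct (Nat.ltb_spec ((length U + length W) * d + j) (length U * d)); [nia|].
  destruct (Nat.ltb_spec ((length U + length W) * d + j) ((length U + length W) * d)); [nia|].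
  destruct (Nat.ltb_spec ((length U + length W) * d + j) ((length U + length W) * d + length W)); [|nia].
  replace ((length U + length W) * d + j - (length U + length W) * d)%nat with j by lia. auto.
Qed.
End Input.

Section Prog.
Variables (d : nat) (U : list point) (W : list ball) (delta : R).
Hypothesis Hd : (1 <= d)%nat.
Hypothesis HU : forall u, In u U -> length u = d.
Hypothesis HW : forall w, In w W -> length (fst w) = d /\ 0 <= snd w.
Local Notation n := (length U).
Local Notation m := (length W).

Definition H0 : nat := ((n + m) * d + m)%nat.

Definition Inv (p i j : nat) (s : state) : Prop :=
  pc s = p /\ ir s 0 = d /\ ir s 1 = n /\ ir s 2 = m /\ ir s 3 = i /\ ir s 4 = j /\
  ir s 6 = (i * d)%nat /\ ir s 7 = ((n + j) * d)%nat /\ ir s 9 = ((n + m) * d + j)%nat /\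
  ir s 11 = 1%nat /\ rr s 0 = delta /\ rm s = input_mem d U W /\ hw s = H0.

Lemma fx (l : list nat) s s' x : FrX l s s' -> ~ In x l -> ir s' x = ir s x.
Proof. intros H; apply H. Qed.
Lemma fr (l : list nat) s s' x : FrR l s s' -> ~ In x l -> rr s' x = rr s x.
Proof. intros H; apply H. Qed.

Lemma mid : forall i j s, (i < n)%nat -> (j < m)%nat -> Inv 13 i j s ->
  RS s (Inv (if certb delta (nth j W ([], 0)) (nth i U []) then 31%nat else 30%nat) i j) (10 * d + 8).
Proof.
  intros i j [p0 IR RR IM RM HW0] Hi Hj
    [Hp [E0 [E1 [E2 [E3 [E4 [E6 [E7 [E9 [E11 [R0 [Rm Hh]]]]]]]]]]]];
    cbn [pc ir rr im rm hw] in *; subst p0 RM HW0.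
  set (wj := nth j W ([], 0)) in *.
  set (u := nth i U []).
  set (c := fst wj).
  assert (Hwj : In wj W) by (apply nth_In; auto).
  destruct (HW wj Hwj) as [Hc Hr0].
  assert (Hu : length u = d) by (apply HU, nth_In; lia).
  replace (10 * d + 8)%nat with (3 + ((10 * d + 1) + 4))%nat by lia.
  stp. rewrite (proj2 (Nat.leb_gt _ _)) by lia.
  stp. stp.
  eapply rs_seq.
  { apply (sumloop u c d); cbn; auto; try lia.
    - intros k Hk. rewrite E6, E7. split.
      + unfold u. rewrite IM1; auto. lia.
      + unfold c, wj. rewrite IM2; auto. lia.
    - unfold H0. nia.
    - unfold H0. nia. }
  intros [p1 IR1 RR1 IM1' RM1 HW1] [A1 [A2 [A3 [A4 [A5 A6]]]]].
  cbn [pc ir rr im rm hw upd Nat.eqb] in *. subst p1 RM1 HW1.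
  pose proof (fx _ _ _ 0 A3 ltac:(simpl; lia)) as F0. cbn in F0.
  pose proof (fx _ _ _ 1 A3 ltac:(simpl; lia)) as F1. cbn in F1.
  pose proof (fx _ _ _ 2 A3 ltac:(simpl; lia)) as F2. cbn in F2.
  pose proof (fx _ _ _ 3 A3 ltac:(simpl; lia)) as F3. cbn in F3.
  pose proof (fx _ _ _ 4 A3 ltac:(simpl; lia)) as F4. cbn in F4.
  pose proof (fx _ _ _ 6 A3 ltac:(simpl; lia)) as F6. cbn in F6.
  pose proof (fx _ _ _ 7 A3 ltac:(simpl; lia)) as F7. cbn in F7.
  pose proof (fx _ _ _ 9 A3 ltac:(simpl; lia)) as F9. cbn in F9.
  pose proof (fx _ _ _ 11 A3 ltac:(simpl; lia)) as F11. cbn in F11.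
  pose proof (fr _ _ _ 0 A4 ltac:(simpl; lia)) as G0. cbn in G0.
  stp. stp. stp. stp.
  rewrite F9, E9, IM3 by auto.
  rewrite A2, E0, G0, R0.
  assert (Eps : psum u c d = sqsum u c) by (rewrite <- Hu; apply psum_sqsum; unfold c; lia). rewrite Eps.
  change (sqrt (sqsum u c)) with (dist u c). fold wj.
  destruct (Rle_dec (dist u c + snd wj) delta) as [Hle|Hgt].
  - rewrite certb_intro_t by auto.
    apply rs_done. unfold Inv. cbn. rewrite G0, R0. repeat split; auto; try lia; unfold H0; lia.
  - rewrite certb_intro_f by auto.
    apply rs_done. unfold Inv. cbn. rewrite G0, R0. repeat split; auto; try lia; unfold H0; lia.
Qed.

Lemma inner : forall r i j s, (i + r = n)%nat -> (j < m)%nat -> Inv 13 i j s ->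
  RS s (Inv 12 (nxt (certb delta (nth j W ([], 0))) U i) (S j))
     ((10 * d + 11) * (nxt (certb delta (nth j W ([], 0))) U i - i) + (10 * d + 13)).
Proof.
  induction r as [|r IH]; intros i j [p0 IR RR IM RM HW0] Hr Hj
    [Hp [E0 [E1 [E2 [E3 [E4 [E6 [E7 [E9 [E11 [R0 [Rm Hh]]]]]]]]]]]];
    cbn [pc ir rr im rm hw] in *; subst p0 RM HW0.
  - rewrite nxt_end by lia. rewrite Nat.sub_diag, Nat.mul_0_r.
    apply (rs_mono _ _ 5); [lia|].
    stp. rewrite (proj2 (Nat.leb_le _ _)) by lia.
    stp. stp. stp. stp. rewrite Nat.leb_refl.
    apply rs_done. unfold Inv. cbn. repeat split; try lia; auto.
  - assert (Hi : (i < n)%nat) by lia.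
    set (f := certb delta (nth j W ([], 0))).
    assert (Hinv : Inv 13 i j (mkState 13 IR RR IM (input_mem d U W) H0)) by (unfold Inv; cbn; repeat split; auto).
    pose proof (mid i j _ Hi Hj Hinv) as M. fold f in M.
    destruct (f (nth i U [])) eqn:Ef.
    + rewrite (nxt_cons_true f U i Hi Ef).
      pose proof (nxt_ge f U (S i)) as Hge.
      eapply rs_mono.
      2:{ eapply rs_seq; [exact M|].
          intros [p1 IR1 RR1 IM1 RM1 HW1]
            [Hp1 [F0 [F1 [F2 [F3 [F4 [F6 [F7 [F9 [F11 [G0 [Gm Gh]]]]]]]]]]]];
          cbn [pc ir rr im rm hw] in *; subst p1 RM1 HW1.
          stp. stp. stp. rewrite Nat.leb_refl.
          apply IH; [lia|auto|].
          unfold Inv; cbn; repeat split; auto; lia. }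
      assert (Esub : (nxt f U (S i) - i)%nat = S (nxt f U (S i) - S i)) by lia.
      rewrite Esub, Nat.mul_succ_r. unfold f in *. lia.
    + rewrite (nxt_cons_false f U i Ef), Nat.sub_diag, Nat.mul_0_r.
      eapply rs_mono.
      2:{ eapply rs_seq; [exact M|].
          intros [p1 IR1 RR1 IM1 RM1 HW1]
            [Hp1 [F0 [F1 [F2 [F3 [F4 [F6 [F7 [F9 [F11 [G0 [Gm Gh]]]]]]]]]]]];
          cbn [pc ir rr im rm hw] in *; subst p1 RM1 HW1.
          stp. rewrite Nat.leb_refl. stp. stp. stp. stp. rewrite Nat.leb_refl.
          apply rs_done with (B := 0%nat).
          unfold Inv; cbn; repeat split; auto; try lia. }
      lia.
Qed.

Definition g (j : nat) : nat := cg delta U (firstn j W) 0.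

Lemma cg_le Ws i : (i <= n)%nat -> (cg delta U Ws i <= n)%nat.
Proof. revert i; induction Ws; simpl; auto. intros; apply IHWs, nxt_le; auto. Qed.

Lemma g_le j : (g j <= n)%nat.
Proof. apply cg_le; lia. Qed.

Lemma g_S j : (j < m)%nat -> g (S j) = nxt (certb delta (nth j W ([], 0))) U (g j).
Proof. intros Hj. unfold g, cg. rewrite (firstn_S_app W j ([], 0)) by auto.
  rewrite fold_left_app. reflexivity. Qed.

Lemma outer : forall r j s, (j + r = m)%nat -> Inv 12 (g j) j s ->
  RS s (Inv 38 (g m) m) ((10 * d + 11) * (n - g j) + (10 * d + 14) * r + 1).
Proof.
  induction r as [|r IH]; intros j [p0 IR RR IM RM HW0] Hr
    [Hp [E0 [E1 [E2 [E3 [E4 [E6 [E7 [E9 [E11 [R0 [Rm Hh]]]]]]]]]]]];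
    cbn [pc ir rr im rm hw] in *; subst p0 RM HW0.
  - apply (rs_mono _ _ 1); [apply Nat.le_add_l|].
    stp. rewrite (proj2 (Nat.leb_le _ _)) by lia.
    apply rs_done. unfold Inv; cbn. replace (g m) with (g j) by (f_equal; lia). repeat split; auto; lia.
  - assert (Hj : (j < m)%nat) by lia.
    assert (Hinv : Inv 13 (g j) j (mkState 13 IR RR IM (input_mem d U W) H0)) by (unfold Inv; cbn; repeat split; auto).
    pose proof (inner (n - g j) (g j) j _ ltac:(pose proof (g_le j); lia) Hj Hinv) as M.
    rewrite <- g_S in M by auto.
    pose proof (g_le (S j)) as L1. pose proof (g_le j) as L2.
    assert (L3 : (g j <= g (S j))%nat) by (rewrite g_S by auto; apply nxt_ge).
    eapply rs_mono.
    2:{ eapply rs_step.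
        { eapply st_IJle. reflexivity. }
        cbn [pc ir rr im rm hw]. rewrite (proj2 (Nat.leb_gt _ _)) by lia.
        eapply rs_seq; [exact M|].
        intros s' Hs'. apply (IH (S j)); [lia|exact Hs']. }
    set (a := g j) in *. set (b := g (S j)) in *.
    assert (Eab : ((10 * d + 11) * (b - a) + (10 * d + 11) * (n - b) = (10 * d + 11) * (n - a))%nat).
    { rewrite <- Nat.mul_add_distr_l. f_equal. lia. }
    rewrite Nat.mul_succ_r. lia.
Qed.

Definition Final (s : state) : Prop :=
  halted prog s /\ hw s = H0 /\ (ir s 0 = 1%nat <-> (n <= g m)%nat).

Lemma final_seg s : Inv 38 (g m) m s -> RS s Final 3.
Proof.
  destruct s as [p0 IR RR IM RM HW0];
  intros [Hp [E0 [E1 [E2 [E3 [E4 [E6 [E7 [E9 [E11 [R0 [Rm Hh]]]]]]]]]]]];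
    cbn [pc ir rr im rm hw] in *; subst p0 RM HW0.
  stp. stp.
  destruct (Nat.leb_spec n (g m)) as [Hle|Hgt]; rewrite ?E1, ?E3.
  - rewrite (proj2 (Nat.leb_le _ _)) by lia. stp.
    apply rs_done. unfold Final, halted; cbn. repeat split; auto.
  - rewrite (proj2 (Nat.leb_gt _ _)) by lia.
    apply rs_done. unfold Final, halted; cbn. repeat split; auto; intros; lia.
Qed.

Lemma setup_seg delta0 : delta0 = delta ->
  RS (init_state d U W delta0) (Inv 12 0 0) (4 * (n + m) + 6).
Proof.
  intros ->. unfold init_state.
  replace (4 * (n + m) + 6)%nat with (2 + ((4 * n + 1) + (2 + ((4 * m + 1) + 0))))%nat by lia.
  stp. stp.
  eapply rs_seq.
  { apply (loop1 n); cbn; auto. }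
  intros [p1 IR1 RR1 IM1 RM1 HW1] [A1 [A2 [A3 [A4 [A5 [A6 A7]]]]]].
  cbn [pc ir rr im rm hw upd Nat.eqb] in *. subst p1 RR1 RM1 HW1.
  pose proof (fx _ _ _ 0 A4 ltac:(simpl; lia)) as F0. cbn in F0.
  pose proof (fx _ _ _ 1 A4 ltac:(simpl; lia)) as F1. cbn in F1.
  pose proof (fx _ _ _ 2 A4 ltac:(simpl; lia)) as F2. cbn in F2.
  pose proof (fx _ _ _ 3 A4 ltac:(simpl; lia)) as F3. cbn in F3.
  pose proof (fx _ _ _ 4 A4 ltac:(simpl; lia)) as F4. cbn in F4.
  pose proof (fx _ _ _ 6 A4 ltac:(simpl; lia)) as F6. cbn in F6.
  pose proof (fx _ _ _ 11 A4 ltac:(simpl; lia)) as F11. cbn in F11.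
  pose proof (fx _ _ _ 13 A4 ltac:(simpl; lia)) as F13. cbn in F13.
  stp. stp.
  eapply rs_seq.
  { apply (loop2 m); cbn; auto; lia. }
  intros [p1 IR2 RR2 IM2 RM2 HW2] [B1 [B2 [B3 [B4 [B5 [B6 B7]]]]]].
  cbn [pc ir rr im rm hw upd Nat.eqb] in *. subst p1 RR2 RM2 HW2.
  pose proof (fx _ _ _ 0 B4 ltac:(simpl; lia)) as G0. cbn in G0.
  pose proof (fx _ _ _ 1 B4 ltac:(simpl; lia)) as G1. cbn in G1.
  pose proof (fx _ _ _ 2 B4 ltac:(simpl; lia)) as G2. cbn in G2.
  pose proof (fx _ _ _ 3 B4 ltac:(simpl; lia)) as G3. cbn in G3.
  pose proof (fx _ _ _ 4 B4 ltac:(simpl; lia)) as G4. cbn in G4.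
  pose proof (fx _ _ _ 6 B4 ltac:(simpl; lia)) as G6. cbn in G6.
  pose proof (fx _ _ _ 7 B4 ltac:(simpl; lia)) as G7. cbn in G7.
  pose proof (fx _ _ _ 11 B4 ltac:(simpl; lia)) as G11. cbn in G11.
  apply rs_done. unfold Inv; cbn. repeat split; auto; try nia.
Qed.

End Prog.

Theorem lemma4p2 :
  exists (P : program) (c : nat),
    forall (d : nat) (U : list point) (W : list ball) (delta : R),
      (1 <= d)%nat -> U <> [] -> W <> [] ->
      (forall u, In u U -> length u = d) ->
      (forall w, In w W -> length (fst w) = d /\ 0 <= snd w) ->
      0 < delta ->
      exists t : nat,
        (t <= c * (d * (length U + length W)))%nat /\
        halted P (run P t (init_state d U W delta)) /\
        (hw (run P t (init_state d U W delta))
           <= c * (d * (length U + length W)))%nat /\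
        (ir (run P t (init_state d U W delta)) 0%nat = 1%nat
           <-> Fmax_le d U W delta).
Proof.
  exists prog, 50%nat.
  intros d U W delta Hd HUn HWn HU HW Hdelta.
  assert (Hn : (1 <= length U)%nat) by (destruct U; simpl; [congruence|lia]).
  assert (Hm : (1 <= length W)%nat) by (destruct W; simpl; [congruence|lia]).
  assert (HRS : RS (init_state d U W delta) (Final d U W delta)
     ((4 * (length U + length W) + 6) + (((10 * d + 11) * (length U - g U W delta 0) + (10 * d + 14) * length W + 1) + 3))).
  { eapply rs_seq; [apply (setup_seg d U W delta); auto|].
    intros s Hs. eapply rs_seq.
    - apply (outer d U W delta Hd HU HW (length W) 0%nat s); [lia|].
      unfold g. simpl. exact Hs.
    - intros s' Hs'. apply final_seg; auto. }
  destruct HRS as [t [Ht [Hh [Hhw Hiff]]]].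
  exists t. split; [|split; [exact Hh|split]].
  - assert (g U W delta 0 = 0%nat) as E by reflexivity. rewrite E in Ht. rewrite Nat.sub_0_r in Ht.
    nia.
  - rewrite Hhw. unfold H0. nia.
  - rewrite Hiff. rewrite (Fmax_equiv d delta U Hd HU W HUn HW).
    unfold g. rewrite firstn_all. tauto.
Qed.
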